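(* Let $X_1,\dots,X_n$ be i.i.d. positive random variables with mean $\mu$ such that $\alpha=\|X_1-\mu\|_{\psi_1}<+\infty$, and let $\hat X_n=\frac1n\sum_{i=1}^nX_i$. Let $\eta=\alpha/\mu$, and for $\delta\in(0,1)$ let $C_{n,\delta}=2\sqrt{\log(2/\delta)/n}+2\log(2/\delta)/n$. Then with probability at least $1-\delta$, $$\mu\ge \hat X_n\,(1-\eta C_{n,\delta})_+ .$$ Moreover, if $\eta C_{n,\delta}\le \tfrac14$, then with probability at least $1-\delta$, $$\hat X_n(1-\eta C_{n,\delta})_+\le\mu\le \hat X_n\Bigl(1+\tfrac43\eta C_{n,\delta}\Bigr).$$
   Context: For a real random variable $Y$, $\|Y\|_{\psi_1}=\inf\{C>0:\mathbb E[\exp(|Y|/C)]\le2\}$ (sub-exponential / Orlicz norm). $(x)_+=\max\{x,0\}$. *)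

(* Defs.v *)
From HB Require Import structures.
From mathcomp Require Import all_boot all_order all_algebra.
From mathcomp Require Import all_classical all_reals all_analysis.
Set Implicit Arguments. Unset Strict Implicit. Unset Printing Implicit Defensive.
Import Order.TTheory GRing.Theory Num.Theory.
Local Open Scope classical_set_scope.
Local Open Scope ring_scope.

Definition psi1_norm d (T : measurableType d) (R : realType)
  (P : probability T R) (Y : T -> R) : \bar R :=
  ereal_inf [set (C%:E) | C in
    [set C : R | 0 < C /\ (\int[P]_x (expR (`|Y x| / C))%:E <= 2%:E)%E]].

Definition mutually_independent d (T : measurableType d) (R : realType)
  (P : probability T R) (n : nat) (X : 'I_n -> T -> R) : Prop :=
  forall A : 'I_n -> set R, (forall i, measurable (A i)) ->
    P (\bigcap_(i in [set: 'I_n]) (X i @^-1` A i)) =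
    (\prod_(i < n) P (X i @^-1` A i))%E.

Definition identically_distributed d (T : measurableType d) (R : realType)
  (P : probability T R) (n : nat) (X : 'I_n -> T -> R) : Prop :=
  forall (i j : 'I_n) (A : set R), measurable A ->
    P (X i @^-1` A) = P (X j @^-1` A).

Definition emp_mean (T : Type) (R : realType) (n : nat) (X : 'I_n -> T -> R)
  (w : T) : R := (\sum_(i < n) X i w) / n%:R.

Definition Cnd (R : realType) (n : nat) (delta : R) : R :=
  2 * Num.sqrt (ln (2 / delta) / n%:R) + 2 * ln (2 / delta) / n%:R.

(* Main.v *)
Require Import Defs.
From HB Require Import structures.
From mathcomp Require Import all_boot all_order all_algebra.
From mathcomp Require Import all_classical all_reals all_analysis.
From mathcomp Require Import finmap ring lra.
Import Order.TTheory GRing.Theory Num.Theory.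
Local Open Scope classical_set_scope.
Local Open Scope ring_scope.
Import measurable_realfun.
Import numFieldNormedType.Exports.
Import HBNNSimple.

Section mgf.
Context (R : realType).

Lemma expR_quad (t z : R) : 0 <= t <= 1 ->
  expR (t * z) <= 1 + t * z + t ^+ 2 * (expR `|z| - 1).
Proof.
move=> /andP[t0 t1].
pose v N := 1 + t * z + t ^+ 2 * (series (exp_coeff `|z|) N - 1).
have cvv : v @ \oo --> 1 + t * z + t ^+ 2 * (expR `|z| - 1).
  apply: cvgD; first exact: cvg_cst.
  apply: cvgM; first exact: cvg_cst.
  apply: cvgB; last exact: cvg_cst.
  exact: is_cvg_series_exp_coeff.
rewrite -(cvg_lim _ cvv)// /expR.
apply: ler_lim; [exact: is_cvg_series_exp_coeff|exact: (cvgP _ cvv)|].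
near=> N.
have [M ->] : exists M, N = M.+2.
  exists N.-2; rewrite -subn2 -addn2 subnK//; near: N; exists 2%N => //.
rewrite /v /series /= !big_nat_recl//= /exp_coeff /= !expr0 !expr1 !fact0 ?divr1.
rewrite addrA lerD2l [1 + _]addrC addrK mulrDr -[X in X <= _]add0r lerD//.
  by rewrite mulr_ge0// exprn_ge0.
rewrite big_distrr /=; apply: ler_sum_nat => i _ /=.
rewrite mulrA ler_wpM2r// ?invr_ge0//.
rewrite (le_trans (ler_norm _))// normrX normrM (ger0_norm t0) exprMn.
rewrite ler_wpM2r ?exprn_ge0//.
by rewrite !exprS !mulrA expr0 mulr1 -[leRHS]mulr1 ler_wpM2l ?mulr_ge0// exprn_ile1.
Unshelve. all: by end_near. Qed.

End mgf.

Section indep.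
Context d (T : measurableType d) (R : realType) (P : probability T R).

Definition pr (A : set T) : R := fine (P A).

Lemma prE A : measurable A -> P A = (pr A)%:E.
Proof. by move=> mA; rewrite /pr fineK// fin_num_measure. Qed.

Lemma int_lincomb (I : finType) (a : I -> R) (E : I -> set T) :
  (forall j, 0 <= a j) -> (forall j, measurable (E j)) ->
  (\int[P]_w (\sum_(j : I) a j * \1_(E j) w)%:E = (\sum_j a j * pr (E j))%:E)%E.
Proof.
move=> a0 mE.
under eq_integral do rewrite -sumEFin.
rewrite ge0_integral_sum//; last 2 first.
- move=> j; apply/measurable_EFinP; apply: measurable_funM => //.
- by move=> j x _; rewrite lee_fin mulr_ge0// indicE.
rewrite -sumEFin; apply: eq_bigr => j _.
under eq_integral do rewrite EFinM.
rewrite ge0_integralZl_EFin//; last first.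
  by apply/measurable_EFinP; exact: measurable_indic.
by rewrite integral_indic// setIT EFinM /pr fineK// fin_num_measure.
Qed.


Lemma prod_indic (I : finType) (A : I -> set T) w :
  \prod_(i : I) \1_(A i) w = \1_(\bigcap_(i in [set: I]) A i) w :> R.
Proof.
have [h|h] := pselect (forall i, A i w).
  rewrite indicE mem_set; last by move=> i _; exact: h.
  by rewrite big1// => i _; rewrite indicE mem_set.
have [i Hi] := (existsNP _).2 h.
rewrite (bigD1 i)//= indicE memNset// mul0r indicE memNset//.
by move=> H; apply: Hi; exact: H.
Qed.

Lemma indep_simple n (X : 'I_n -> T -> R) :
  (forall i, measurable_fun setT (X i)) -> mutually_independent P X ->
  forall m (c : 'I_m -> R) (B : 'I_m -> set R),
  (forall k, 0 <= c k) -> (forall k, measurable (B k)) ->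
  (\int[P]_w (\prod_i \sum_k c k * \1_(B k) (X i w))%:E =
   \prod_i \int[P]_w (\sum_k c k * \1_(B k) (X i w))%:E)%E.
Proof.
move=> mX ind m c B c0 mB.
have mpre i k : measurable (X i @^-1` B k).
  by rewrite -[X in measurable X]setTI; exact: mX.
have E1 w : \prod_i \sum_k c k * \1_(B k) (X i w) =
   \sum_(f : {ffun 'I_n -> 'I_m}) (\prod_i c (f i)) *
      \1_(\bigcap_(i in [set: 'I_n]) (X i @^-1` B (f i))) w.
  rewrite bigA_distr_bigA; apply: eq_bigr => f _; rewrite big_split /=.
  by rewrite -prod_indic.
have E2 i w : \sum_k c k * \1_(B k) (X i w) =
   \sum_k c k * \1_(X i @^-1` B k) w.
  by apply: eq_bigr => k _; rewrite !indicE.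
under eq_integral do rewrite E1.
rewrite int_lincomb//; last 2 first.
- by move=> f; apply: prodr_ge0 => i _.
- by move=> f; apply: fin_bigcap_measurable => // i _; exact: mpre.
have E3 i : (\int[P]_w (\sum_k c k * \1_(B k) (X i w))%:E =
    (\sum_k c k * pr (X i @^-1` B k))%:E)%E.
  by under eq_integral do rewrite E2; rewrite int_lincomb.
rewrite (eq_bigr _ (fun i _ => E3 i)).
rewrite prodEFin; congr EFin.
rewrite bigA_distr_bigA; apply: eq_bigr => f _; rewrite big_split /=; congr (_ * _).
apply: EFin_inj; rewrite -prodEFin /pr fineK ?fin_num_measure//.
rewrite ind//; apply: eq_bigr => i _; rewrite fineK// fin_num_measure//.
by apply: fin_bigcap_measurable => // i _; exact: mpre.
Qed.


Lemma lee_prod_ge0 (I : finType) (F G : I -> \bar R) :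
  (forall i, 0 <= F i <= G i)%E -> (\prod_i F i <= \prod_i G i)%E.
Proof.
move=> FG.
suff /andP[] : (0 <= \prod_i F i <= \prod_i G i)%E by [].
apply: (big_ind2 (fun x y => 0 <= x <= y)%E).
- by apply/andP; split.
- move=> x1 x2 y1 y2 /andP[x10 x12] /andP[y10 y12].
  by rewrite mule_ge0//= lee_pmul.
- by move=> i _; exact: FG.
Qed.

Lemma cvg_prodr (I : finType) (u : nat -> I -> R) (l : I -> R) :
  (forall i, u^~ i @ \oo --> l i) ->
  (fun k => \prod_i u k i) @ \oo --> \prod_i l i.
Proof.
move=> cu; rewrite unlock /reducebig.
elim: (index_enum I) => [|i s IH] /=; first exact: cvg_cst.
exact: cvgM.
Qed.

Lemma indep_mgf n (X : 'I_n -> T -> R) (g : R -> R) :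
  (forall i, measurable_fun setT (X i)) -> mutually_independent P X ->
  measurable_fun setT g -> (forall x, 0 <= g x) ->
  (\int[P]_w (\prod_i g (X i w))%:E <= \prod_i \int[P]_w (g (X i w))%:E)%E.
Proof.
move=> mX ind mg g0.
have mf : measurable_fun setT (EFin \o g) by exact/measurable_EFinP.
pose s k := nnsfun_approx measurableT mf k.
have sE k x : s k x = \sum_(j < size (finmap.enum_fset (fset_set (range (s k)))))
   (finmap.enum_fset (fset_set (range (s k))))`_j *
   \1_(s k @^-1` [set (finmap.enum_fset (fset_set (range (s k))))`_j]) x.
  exact: fimfunEord.
have s_ge0 k x : 0 <= s k x by exact: fun_ge0.
have f0 x : setT x -> (0 <= (EFin \o g) x)%E by move=> _; rewrite lee_fin.
have s_le k x : s k x <= g x.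
  by rewrite /s nnsfun_approxE -lee_fin; exact: le_approx.
have s_cvg x : s^~ x @ \oo --> g x.
  exact: (fine_cvg (cvg_nnsfun_approx measurableT mf f0 (I : setT x))).
have s_nd x : {homo s^~ x : a b / (a <= b)%N >-> a <= b}.
  by move=> a b ab; exact/lefP/nd_nnsfun_approx.
have ms k : measurable_fun setT (s k) by exact: measurable_funPT.
have step k : (\int[P]_w (\prod_i s k (X i w))%:E =
    \prod_i \int[P]_w (s k (X i w))%:E)%E.
  under eq_integral do under eq_bigr do rewrite sE.
  under eq_bigr do under eq_integral do rewrite sE.
  apply: indep_simple => //.
  move=> j.
  have H := mem_nth 0 (ltn_ord j).
  have : (finmap.enum_fset (fset_set (range (s k))))`_j \in fset_set (range (s k)) by [].
  rewrite in_fset_set; last exact: fimfunP.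
  by move=> /set_mem [y _ <-]; exact: s_ge0.
pose F k w := (\prod_(i < n) s k (X i w))%:E.
have mF k : measurable_fun setT (F k).
  apply/measurable_EFinP; apply: measurable_prod => i _.
  exact: measurableT_comp.
have F0 k w : setT w -> (0 <= F k w)%E.
  by move=> _; rewrite lee_fin; apply: prodr_ge0 => i _.
have Fnd w : setT w -> {homo F^~ w : a b / (a <= b)%N >-> (a <= b)%E}.
  move=> _ a b ab; rewrite lee_fin; apply: ler_prod => i _.
  by rewrite s_ge0 s_nd.
have Flim w : limn (F^~ w) = (\prod_i g (X i w))%:E.
  have cv := @cvg_prodr (ordinal n) (fun k i => s k (X i w)) (fun i => g (X i w)) (fun i => s_cvg (X i w)).
  rewrite (_ : F^~ w = EFin \o (fun k => \prod_(i < n) s k (X i w)))//.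
  by rewrite EFin_lim; [rewrite (cvg_lim _ cv)|exact: (cvgP _ cv)].
rewrite (eq_integral (fun w => limn (F^~ w))); last by move=> w _; rewrite Flim.
rewrite monotone_convergence//.
apply: lime_le.
  apply: ereal_nondecreasing_is_cvgn => a b ab.
  apply: ge0_le_integral => // [w _|w _]; [exact: F0|exact: (Fnd w I)].
apply: nearW => k; rewrite /F step; apply: lee_prod_ge0 => i.
apply/andP; split; first by apply: integral_ge0 => w _; rewrite lee_fin.
apply: ge0_le_integral => //.
- by move=> w _; rewrite lee_fin.
- by apply/measurable_EFinP; exact: measurableT_comp.
- by apply/measurable_EFinP; exact: measurableT_comp.
- by move=> w _; rewrite lee_fin.
Qed.


Lemma mgf_bound (Y : T -> R) (mY : measurable_fun setT Y)
  (iY : P.-integrable setT (EFin \o Y)) (EY : (\int[P]_w (Y w)%:E = 0)%E)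
  (a : R) (a0 : 0 < a) (ha : (\int[P]_w (expR (`|Y w| / a))%:E <= 2%:E)%E)
  (t : R) (t01 : 0 <= t <= 1) :
  (\int[P]_w (expR (t / a * Y w))%:E <= (1 + t ^+ 2)%:E)%E.
Proof.
pose z w := a^-1 * Y w.
pose h w := expR `|z w|.
have hE w : expR (`|Y w| / a) = h w.
  by rewrite /h /z normrM gtr0_norm ?invr_gt0// mulrC.
have pt w : expR (t / a * Y w) <=
    (1 - t ^+ 2) + (t * z w + t ^+ 2 * h w).
  have := @expR_quad R t (z w) t01; rewrite /z /h.
  by rewrite (_ : t * (a^-1 * Y w) = t / a * Y w); [lra|ring].
have mz : measurable_fun setT z by apply: measurable_funM.
have mh : measurable_fun setT h.
  by apply: measurableT_comp => //; apply: measurableT_comp.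
have iz : P.-integrable setT (EFin \o z).
  have := integrableZl measurableT (a^-1) iY.
  by apply: eq_integrable => // w _ /=; rewrite EFinM.
have ih : P.-integrable setT (EFin \o h).
  apply/integrableP; split; first exact/measurable_EFinP.
  under eq_integral do rewrite /= ger0_norm ?expR_ge0// -hE.
  by rewrite (le_lt_trans ha)// ltry.
have Ez : (\int[P]_w (z w)%:E = 0)%E.
  under eq_integral do rewrite EFinM.
  by rewrite integralZl// EY mule0.
have [v hv] : exists v, (\int[P]_w (h w)%:E = v%:E)%E.
  exists (fine (\int[P]_w (h w)%:E)); rewrite fineK//.
  rewrite ge0_fin_numE; last by apply: integral_ge0 => w _; rewrite lee_fin expR_ge0.
  by under eq_integral do rewrite -hE; rewrite (le_lt_trans ha)// ltry.
have v2 : v <= 2.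
  by rewrite -lee_fin -hv; under eq_integral do rewrite -hE.
apply: (@le_trans _ _ (\int[P]_w ((1 - t ^+ 2) + (t * z w + t ^+ 2 * h w))%:E)%E).
  apply: ge0_le_integral => //.
  - apply/measurable_EFinP; apply: measurableT_comp => //.
    by apply: measurable_funM.
  - apply/measurable_EFinP; apply: measurable_funD => //.
    by apply: measurable_funD => //; apply: measurable_funM.
  - by move=> w _; rewrite lee_fin.
have it1 : P.-integrable setT (EFin \o (fun w => t * z w)).
  have := integrableZl measurableT t iz.
  by apply: eq_integrable => // w _ /=; rewrite EFinM.
have it2 : P.-integrable setT (EFin \o (fun w => t ^+ 2 * h w)).
  have := integrableZl measurableT (t ^+ 2) ih.
  by apply: eq_integrable => // w _ /=; rewrite EFinM.
rewrite (eq_integral (fun w => ((1 - t ^+ 2)%R)%:E +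
    (((t * z w)%R)%:E + ((t ^+ 2 * h w)%R)%:E))%E); last first.
  by move=> w _; rewrite !EFinD.
rewrite integralD//; last first.
  by apply: integrableD => //.
  exact: (finite_measure_integrable_cst _ (1 - t ^+ 2)).
rewrite integralD//.
have P1 : (P : measure T R) [set: T] = 1%E by apply: probability_setT.
rewrite integral_cst// P1 mule1.
under eq_integral do rewrite /= EFinM.
rewrite integralZl// Ez mule0 add0e.
under eq_integral do rewrite /= EFinM.
rewrite integralZl// hv -!EFinM -EFinD lee_fin.
have : 0 <= t ^+ 2 by rewrite exprn_ge0//; case/andP: t01.
nra.
Qed.


Lemma meas_ge (f : T -> R) (x : R) : measurable_fun setT f ->
  measurable [set w | x <= f w].
Proof.
move=> mf.
have -> : [set w | x <= f w] = f @^-1` `[x, +oo[.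
  by apply/seteqP; split => w /=; rewrite in_itv /= andbT.
by rewrite -[X in measurable X]setTI; apply: mf => //; exact: measurable_itv.
Qed.

Lemma meas_gt (f : T -> R) (x : R) : measurable_fun setT f ->
  measurable [set w | x < f w].
Proof.
move=> mf.
have -> : [set w | x < f w] = f @^-1` `]x, +oo[.
  by apply/seteqP; split => w /=; rewrite in_itv /= andbT.
by rewrite -[X in measurable X]setTI; apply: mf => //; exact: measurable_itv.
Qed.

Lemma cont_tail (f : T -> R) (c : R) (b : \bar R) : measurable_fun setT f ->
  (forall s, c < s -> (P [set w | (s <= f w)%R] <= b)%E) ->
  (P [set w | (c < f w)%R] <= b)%E.
Proof.
move=> mf H.
pose F k := [set w | c + k.+1%:R^-1 <= f w].
have mF k : measurable (F k) by exact: meas_ge.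
have UF : \bigcup_k F k = [set w | c < f w].
  apply/seteqP; split => w /=.
    by move=> [k _]; apply: lt_le_trans; rewrite ltrDl invr_gt0.
  move=> /ltr_add_invr [k hk]; exists k => //; exact: ltW.
have nd : {homo F : k m / (k <= m)%N >-> (k <= m)%O}.
  move=> k m km; apply/subsetPset => w; rewrite /F /=; apply: le_trans.
  by rewrite lerD2l lef_pV2 ?posrE// ler_nat.
have mU : measurable (\bigcup_k F k) by rewrite UF; exact: meas_gt.
have cv := @nondecreasing_cvg_mu _ _ _ (P : measure T R) F mF mU nd; rewrite UF in cv.
rewrite -(cvg_lim _ cv)//; apply: lime_le; first exact: (cvgP _ cv).
by apply: nearW => k; apply: H; rewrite ltrDl invr_gt0.
Qed.


Lemma markov_ge0 (f : T -> R) (c : R) : measurable_fun setT f ->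
  (forall w, 0 <= f w) -> 0 < c ->
  (c%:E * P [set w | (c <= f w)%R] <= \int[P]_w (f w)%:E)%E.
Proof.
move=> mf f0 c0.
have mA := @meas_ge f c mf.
have -> : P [set w | (c <= f w)%R] = (\int[P]_w (\1_[set w | (c <= f w)%R] w)%:E)%E.
  by rewrite integral_indic// setIT.
rewrite -ge0_integralZl_EFin//; last 2 first.
- by apply/measurable_EFinP; exact: measurable_indic.
- exact: ltW.
apply: ge0_le_integral => //.
- by move=> w _; rewrite lee_fin mulr_ge0// ltW.
- apply/measurable_EFinP; apply: measurable_funM => //; exact: measurable_indic.
- exact/measurable_EFinP.
move=> w _; rewrite lee_fin indicE.
by case: (boolP (w \in _)) => [/set_mem h|_]; rewrite ?mulr1 ?mulr0.
Qed.

Lemma indep_comp n (X : 'I_n -> T -> R) (phi : R -> R) :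
  measurable_fun setT phi -> mutually_independent P X ->
  mutually_independent P (fun i => phi \o X i).
Proof.
move=> mphi ind A mA; rewrite (ind (fun i => phi @^-1` A i)) //.
by move=> i; rewrite -[X in measurable X]setTI; apply: mphi.
Qed.

Lemma chernoff_sum n (Y : 'I_n -> T -> R) (a t s : R) :
  (forall i, measurable_fun setT (Y i)) -> mutually_independent P Y ->
  (forall i, P.-integrable setT (EFin \o Y i)) ->
  (forall i, \int[P]_w (Y i w)%:E = 0)%E ->
  0 < a -> (forall i, \int[P]_w (expR (`|Y i w| / a))%:E <= 2%:E)%E ->
  0 < t <= 1 ->
  (P [set w | (s <= \sum_i Y i w)%R] <= (expR (n%:R * t ^+ 2 - t / a * s))%:E)%E.
Proof.
move=> mY ind iY EY a0 ha /andP[t0 t1].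
have l0 : 0 < t / a by rewrite divr_gt0.
have mS : measurable_fun setT (fun w => \sum_i Y i w).
  by apply: measurable_sum => i; exact: mY.
have mE : measurable_fun setT (fun w => expR (t / a * \sum_i Y i w)).
  by apply: measurableT_comp => //; apply: measurable_funM.
have -> : [set w | (s <= \sum_i Y i w)%R] =
    [set w | (expR (t / a * s) <= expR (t / a * \sum_i Y i w))%R].
  by apply/seteqP; split => w /=; rewrite ler_expR ler_pM2l.
rewrite -(@lee_pmul2l _ (expR (t / a * s))%:E)//; last by rewrite lte_fin expR_gt0.
apply: le_trans (@markov_ge0 _ (expR (t / a * s)) mE _ (expR_gt0 _)) _; first by move=> w; exact: expR_ge0.
under eq_integral do rewrite mulr_sumr expR_sum.
apply: le_trans (@indep_mgf n Y (fun x => expR (t / a * x)) mY ind _ _) _.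
- by apply: measurableT_comp => //; apply: measurable_funM.
- by move=> x; exact: expR_ge0.
apply: (@le_trans _ _ (\prod_(i < n) (1 + t ^+ 2)%:E)%E).
  apply: lee_prod_ge0 => i; apply/andP; split.
    by apply: integral_ge0 => w _; rewrite lee_fin expR_ge0.
  by apply: mgf_bound => //; rewrite ltW ?t1.
rewrite prodEFin -EFinM lee_fin -expRD addrCA subrr addr0 prodr_const card_ord.
rewrite expRM_natl.
apply: lerXn2r; [by rewrite nnegrE addr_ge0// exprn_ge0// ltW|by rewrite nnegrE expR_ge0|].
exact: expR_ge1Dx.
Qed.


Lemma id_int (X1 X2 : T -> R) (g : R -> R) :
  measurable_fun setT X1 -> measurable_fun setT X2 ->
  (forall A, measurable A -> P (X1 @^-1` A) = P (X2 @^-1` A)) ->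
  measurable_fun setT g -> (forall x, 0 <= g x) ->
  (\int[P]_w (g (X1 w))%:E = \int[P]_w (g (X2 w))%:E)%E.
Proof.
move=> m1 m2 H mg g0.
have mg' : measurable_fun setT (EFin \o g) by exact/measurable_EFinP.
have g0' : {in setT, forall y, (0 <= (EFin \o g) y)%E}.
  by move=> y _; rewrite /= lee_fin.
have h1 := @ge0_integral_pushforward _ _ _ _ _ X1 m1 P setT (EFin \o g) measurableT mg' g0'.
have h2 := @ge0_integral_pushforward _ _ _ _ _ X2 m2 P setT (EFin \o g) measurableT mg' g0'.
rewrite preimage_setT in h1 h2.
rewrite -[LHS]h1 -[RHS]h2.
by apply: eq_measure_integral => A mA _; exact: H.
Qed.


Lemma tail n (Y : 'I_n -> T -> R) (al L : R) :
  (0 < n)%N ->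
  (forall i, measurable_fun setT (Y i)) -> mutually_independent P Y ->
  (forall i, P.-integrable setT (EFin \o Y i)) ->
  (forall i, \int[P]_w (Y i w)%:E = 0)%E ->
  (forall b, al < b -> exists a, 0 < a <= b /\
     forall i, (\int[P]_w (expR (`|Y i w| / a))%:E <= 2%:E)%E) ->
  0 <= al -> 0 < L ->
  (P [set w | (al * (2 * Num.sqrt (L / n%:R) + 2 * L / n%:R) <
               (\sum_i Y i w) / n%:R)%R] <= (expR (- L))%:E)%E.
Proof.
move=> n0 mY ind iY EY adm al0 L0.
have nR : 0 < n%:R :> R by rewrite ltr0n.
set r := Num.sqrt (L / n%:R).
have Ln0 : 0 < L / n%:R by rewrite divr_gt0.
have r0 : 0 < r by rewrite sqrtr_gt0.
have r2 : r ^+ 2 = L / n%:R by rewrite sqr_sqrtr// ltW.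
have LE : L = n%:R * r ^+ 2 by rewrite r2 mulrC divfK// gt_eqF.
set C := 2 * r + 2 * L / n%:R.
have CE : C = 2 * r + 2 * r ^+ 2 by rewrite /C r2 mulrA.
have C0 : 0 < C by rewrite CE addr_gt0// mulr_gt0// exprn_gt0.
have mS : measurable_fun setT (fun w => (\sum_i Y i w) / n%:R).
  by apply: measurable_funM => //; apply: measurable_sum => i; exact: mY.
apply: (@cont_tail (fun w => (\sum_i Y i w) / n%:R) _ _ mS) => s hs.
have s0 : 0 < s by apply: le_lt_trans hs; rewrite mulr_ge0// ltW.
pose m := Num.min r 1.
have m0 : 0 < m by rewrite lt_min r0 ltr01.
have m1 : m <= 1 by rewrite ge_min lexx orbT.
have hb : al < s * (1 + m) / C.
  rewrite ltr_pdivlMr//; nra.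
have [a [/andP[a0 ab] ha]] := adm _ hb.
have -> : [set w | (s <= (\sum_i Y i w) / n%:R)%R] =
    [set w | (n%:R * s <= \sum_i Y i w)%R].
  by apply/seteqP; split => w /=; rewrite ler_pdivlMr// mulrC.
apply: le_trans (@chernoff_sum n Y a m (n%:R * s) mY ind iY EY a0 ha _) _.
  by rewrite m0 m1.
rewrite lee_fin ler_expR.
pose K := s / a.
have HK : C <= K * (1 + m).
  move: ab; rewrite ler_pdivlMr// => ab.
  by rewrite /K mulrAC ler_pdivlMr// mulrC.
have -> : m / a * (n%:R * s) = n%:R * (m * K).
  by rewrite /K; field; rewrite gt_eqF.
rewrite LE.
suff : r ^+ 2 <= m * K - m ^+ 2 by move=> h; nra.
rewrite CE in HK.
have [rle1|rgt1] := leP r 1.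
  have mE : m = r by rewrite /m min_l.
  rewrite mE in HK *; nra.
have mE : m = 1 by rewrite /m min_r// ltW.
rewrite mE in HK *; nra.
Qed.


Lemma meas_le (f : T -> R) (x : R) : measurable_fun setT f ->
  measurable [set w | f w <= x].
Proof.
move=> mf.
have -> : [set w | f w <= x] = f @^-1` `]-oo, x].
  by apply/seteqP; split => w /=; rewrite in_itv.
by rewrite -[X in measurable X]setTI; apply: mf => //; exact: measurable_itv.
Qed.

End indep.

Lemma alg1 (R : realType) (e m x : R) : 0 < m -> 0 <= x -> e - m <= x * m ->
  e * Num.max (1 - x) 0 <= m.
Proof.
move=> m0 x0 h; rewrite /Num.max; case: ifPn => h1.
  by rewrite mulr0 ltW.
rewrite -leNgt in h1.
have h2 : 0 <= (m + x * m - e) * (1 - x) by rewrite mulr_ge0//; lra.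
have h3 : 0 <= m * x ^+ 2 by apply: mulr_ge0; [exact: ltW|exact: sqr_ge0].
nra.
Qed.

Lemma alg2 (R : realType) (e m x : R) : 0 < m -> 0 <= x -> x <= 1 / 4 ->
  m - e <= x * m -> m <= e * (1 + 4 / 3 * x).
Proof.
move=> m0 x0 x4 h.
have h2 : 0 <= (e - m + x * m) * (1 + 4 / 3 * x).
  by rewrite mulr_ge0//; [lra|]; rewrite addr_ge0// mulr_ge0.
have h4 : 0 <= 1 - 4 * x by lra.
have h3 : 0 <= m * x * (1 - 4 * x) by apply: mulr_ge0 => //; apply: mulr_ge0 => //; exact: ltW.
nra.
Qed.

Theorem lemma5p1 (d : measure_display) (T : measurableType d) (R : realType)
  (P : probability T R) (n : nat) (hn : (0 < n)%N)
  (X : 'I_n -> {RV P >-> R}) (mu alpha delta : R) :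
  mutually_independent P (fun i => X i : T -> R) ->
  identically_distributed P (fun i => X i : T -> R) ->
  (forall i w, 0 < X i w) ->
  (forall i, ('E_P[X i] = mu%:E)%E) ->
  psi1_norm P (fun w => X (Ordinal hn) w - mu) = alpha%:E ->
  0 < delta < 1 ->
  let eta := alpha / mu in
  let C := Cnd n delta in
  ((1 - delta)%:E <=
     P [set w | (emp_mean (fun i => X i : T -> R) w * Num.max (1 - eta * C) 0 <= mu)%R])%E /\
  (eta * C <= 1 / 4 ->
   ((1 - delta)%:E <=
     P [set w | (emp_mean (fun i => X i : T -> R) w * Num.max (1 - eta * C) 0 <= mu)%R /\
               (mu <= emp_mean (fun i => X i : T -> R) w * (1 + 4 / 3 * eta * C))%R])%E).
Proof.
move=> ind idd Xpos EX psi /andP[dl0 dl1] eta C.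
pose X0 := X (Ordinal hn).
have mX i : measurable_fun setT (X i) by exact: measurable_funPT.
have IX i : (\int[P]_w (X i w)%:E = mu%:E)%E by rewrite -expectation_def.
have iX i : P.-integrable setT (EFin \o X i).
  apply/integrableP; split; first exact/measurable_EFinP.
  under eq_integral do rewrite /= ger0_norm ?ltW ?Xpos//.
  by rewrite IX ltry.
have mu0 : 0 < mu.
  rewrite ltNge; apply/negP => hmu.
  have : (P [set w | (0 < X0 w)%R] <= 0)%E.
    apply: cont_tail => // s s0.
    have := @markov_ge0 _ _ _ P X0 s (mX _) (fun w => ltW (Xpos _ w)) s0.
    rewrite IX => h.
    have h2 : (s%:E * P [set w | (s <= X0 w)%R] <= s%:E * 0)%E.
      by rewrite mule0 (le_trans h)// lee_fin.
    by rewrite lee_pmul2l ?lte_fin// in h2; apply: fin_num_measure.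
  have -> : [set w | (0 < X0 w)%R] = setT.
    by apply/seteqP; split => w //= _; exact: Xpos.
  by rewrite probability_setT lee_fin ler10.
have P1 : (P : measure T R) [set: T] = 1%E by apply: probability_setT.
rewrite /psi1_norm in psi.
have al0 : 0 <= alpha.
  rewrite -lee_fin -psi; apply/ereal_infP => y [c [c0 _] <-].
  by rewrite lee_fin ltW.
have adm0 b : alpha < b -> exists a, 0 < a <= b /\
    (\int[P]_w (expR (`|X0 w - mu| / a))%:E <= 2%:E)%E.
  move=> ab.
  have : (alpha%:E < b%:E)%E by rewrite lte_fin.
  rewrite -psi => /ereal_inf_lt [y [c [c0 hc] <-]]; rewrite lte_fin => cb.
  by exists c; rewrite c0 ltW.
have same i a : (\int[P]_w (expR (`|X i w - mu| / a))%:E =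
    \int[P]_w (expR (`|X0 w - mu| / a))%:E)%E.
  apply: (@id_int _ _ _ P (X i) X0 (fun x => expR (`|x - mu| / a)) (mX i) (mX _)).
  - by move=> A mA; exact: idd.
  - apply: measurableT_comp => //; apply: measurable_funM => //.
    apply: measurableT_comp => //; exact: measurable_funB.
  - by move=> x; exact: expR_ge0.
have L0 : 0 < ln (2 / delta).
  by apply: ln_gt0; rewrite ltr_pdivlMr// mul1r (lt_trans dl1)// ltr1n.
have eL : expR (- ln (2 / delta)) = delta / 2.
  rewrite expRN lnK ?posrE ?divr_gt0// invf_div//.
pose Yu i w := X i w - mu.
have mYu i : measurable_fun setT (Yu i) by apply: measurable_funB => //.
have indU : mutually_independent P Yu.
  have := @indep_comp _ _ _ P n (fun i => X i : T -> R) (fun x => x - mu).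
  by apply => //; apply: measurable_funB.
have iYu i : P.-integrable setT (EFin \o Yu i).
  have := integrableB measurableT (iX i) (finite_measure_integrable_cst P mu measurableT).
  by apply: eq_integrable => // w _ /=; rewrite EFinB.
have EYu i : (\int[P]_w (Yu i w)%:E = 0)%E.
  under eq_integral do rewrite EFinB.
  rewrite integralB_EFin//; last exact: finite_measure_integrable_cst.
  by rewrite IX integral_cst// P1 mule1 subee.
have admU b : alpha < b -> exists a, 0 < a <= b /\
    forall i, (\int[P]_w (expR (`|Yu i w| / a))%:E <= 2%:E)%E.
  move=> /adm0 [a [ab h]]; exists a; split => // i.
  by rewrite /Yu same.
pose Yd i w := mu - X i w.
have mYd i : measurable_fun setT (Yd i) by apply: measurable_funB => //.
have indD : mutually_independent P Yd.
  have := @indep_comp _ _ _ P n (fun i => X i : T -> R) (fun x => mu - x).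
  by apply => //; apply: measurable_funB.
have iYd i : P.-integrable setT (EFin \o Yd i).
  have := integrableB measurableT (finite_measure_integrable_cst P mu measurableT) (iX i).
  by apply: eq_integrable => // w _ /=; rewrite EFinB.
have EYd i : (\int[P]_w (Yd i w)%:E = 0)%E.
  under eq_integral do rewrite EFinB.
  rewrite integralB_EFin//; last exact: finite_measure_integrable_cst.
  by rewrite IX integral_cst// P1 mule1 subee.
have admD b : alpha < b -> exists a, 0 < a <= b /\
    forall i, (\int[P]_w (expR (`|Yd i w| / a))%:E <= 2%:E)%E.
  move=> /adm0 [a [ab h]]; exists a; split => // i.
  by under eq_integral do rewrite /Yd distrC; rewrite same.
have tU := @tail _ _ _ P n Yu alpha (ln (2 / delta)) hn mYu indU iYu EYu admU al0 L0.
have tD := @tail _ _ _ P n Yd alpha (ln (2 / delta)) hn mYd indD iYd EYd admD al0 L0.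
rewrite -/(Cnd n delta) -/C eL in tU tD.
pose emp := emp_mean (fun i => X i : T -> R).
have nR : 0 < n%:R :> R by rewrite ltr0n.
have empE w : (\sum_i Yu i w) / n%:R = emp w - mu.
  rewrite /Yu sumrB sumr_const card_ord /emp /emp_mean mulrBl; congr (_ - _).
  by rewrite -[mu *+ n]mulr_natr mulfK// gt_eqF.
have empD w : (\sum_i Yd i w) / n%:R = mu - emp w.
  rewrite /Yd sumrB sumr_const card_ord /emp /emp_mean mulrBl; congr (_ - _).
  by rewrite -[mu *+ n]mulr_natr mulfK// gt_eqF.
pose B1 := [set w | (alpha * C < (\sum_i Yu i w) / n%:R)%R].
pose B2 := [set w | (alpha * C < (\sum_i Yd i w) / n%:R)%R].
have mB1 : measurable B1.
  apply: meas_gt; apply: measurable_funM => //; apply: measurable_sum => i; exact: mYu.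
have mB2 : measurable B2.
  apply: meas_gt; apply: measurable_funM => //; apply: measurable_sum => i; exact: mYd.
have memp : measurable_fun setT emp.
  apply: measurable_funM => //; apply: measurable_sum => i; exact: mX.
have hG : ((1 - delta)%:E <= P (~` (B1 `|` B2)))%E.
  rewrite probability_setC; last exact: measurableU.
  have hU : (P (B1 `|` B2) <= delta%:E)%E.
    apply: le_trans (measureU2 _ mB1 mB2) _.
    by rewrite (splitr delta) EFinD; apply: leeD.
  have fU : P (B1 `|` B2) \is a fin_num by apply: fin_num_measure; exact: measurableU.
  rewrite -(fineK fU) in hU *; rewrite lee_fin in hU.
  by rewrite -EFinB lee_fin; lra.
have C0 : 0 < C.
  rewrite /C /Cnd; apply: addr_gt0.
    by apply: mulr_gt0 => //; rewrite sqrtr_gt0 divr_gt0.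
  by apply: divr_gt0 => //; apply: mulr_gt0.
have x0 : 0 <= eta * C by apply: mulr_ge0; [apply: divr_ge0 => //; exact: ltW|exact: ltW].
have aC : alpha * C = eta * C * mu by rewrite /eta; field; rewrite gt_eqF.
have key w : (~` (B1 `|` B2)) w -> emp w - mu <= eta * C * mu /\ mu - emp w <= eta * C * mu.
  move=> h; rewrite -aC; split; rewrite leNgt; apply/negP => h'; apply: h.
    by left; rewrite /B1 /= empE.
  by right; rewrite /B2 /= empD.
have mA1 : measurable [set w | (emp w * Num.max (1 - eta * C) 0 <= mu)%R].
  by apply: meas_le; apply: measurable_funM.
split.
  apply: le_trans hG _; apply: le_measure.
  - by apply: mem_set; apply: measurableC; exact: measurableU.
  - by apply: mem_set; exact: mA1.
  move=> w /key [h1 h2]; exact: alg1.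
move=> hx.
apply: le_trans hG _; apply: le_measure.
- by apply: mem_set; apply: measurableC; exact: measurableU.
- apply: mem_set; apply: measurableI => //.
  by apply: meas_ge; apply: measurable_funM.
move=> w /key [h1 h2]; split; first exact: alg1.
by rewrite -(mulrA (4 / 3)); exact: alg2.
Qed.
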